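(* Let $J$ and $J'$ be intervals and let $s,s':J\to J'$ be two shrinkings. Then $s$ and $s'$ are homotopic relative to $\partial J$; that is, the category whose objects are intervals and whose morphisms are shrinkings modulo homotopy relative to $\partial J$ is a poset.
   Context: A digraph has a vertex set and arrows $E\subseteq V\times V$ containing the diagonal; digraph maps preserve arrows. An interval is a digraph $J$ with vertices $\{0,\dots,k\}$ whose non-degenerate arrows are, for each $0\le i<k$, exactly one of $i\to i+1$ or $i+1\to i$; $\partial J=\{0,k\}$. A shrinking is a digraph map between intervals that is surjective and monotone on vertices. Two digraph maps $\varphi,\psi:J\to J'$ with $\varphi|_{\partial J}=\psi|_{\partial J}$ are homotopic relative to $\partial J$ if there is a finite chain of digraph maps $\varphi=\varphi_0,\dots,\varphi_r=\psi$, all agreeing on $\partial J$, such that for each $t$ either $\varphi_t(x)\to\varphi_{t+1}(x)$ for all vertices $x$, or $\varphi_{t+1}(x)\to\varphi_t(x)$ for all $x$. *)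

(* Defs.v *)
From mathcomp Require Import all_boot.
From Stdlib Require Import Relations.Relation_Operators.
Set Implicit Arguments. Unset Strict Implicit. Unset Printing Implicit Defensive.

(* An interval J is encoded by d : seq bool of length k; its vertex set is
   {0,...,k} = 'I_(size d).+1.  For i < k, the unique non-degenerate arrow
   between i and i+1 is  i -> i+1  if nth false d i = true, and
   i+1 -> i  if nth false d i = false. *)
Definition ivert (d : seq bool) := 'I_(size d).+1.

Definition iarrow (d : seq bool) (x y : nat) : bool :=
  [|| x == y, (y == x.+1) && nth false d x | (x == y.+1) && ~~ nth false d y].

Definition idmap (d d' : seq bool) (f : ivert d -> ivert d') : Prop :=
  forall x y : ivert d, iarrow d x y -> iarrow d' (f x) (f y).

Definition shrinking (d d' : seq bool) (f : ivert d -> ivert d') : Prop :=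
  [/\ idmap f,
      (forall y : ivert d', exists x : ivert d, f x = y) &
      (forall x y : ivert d, x <= y -> f x <= f y)].

Definition bnd0 (d : seq bool) : ivert d := ord0.
Definition bndk (d : seq bool) : ivert d := ord_max.

Definition htop_step (d d' : seq bool) (f g : ivert d -> ivert d') : Prop :=
  [/\ idmap f, idmap g, f (bnd0 d) = g (bnd0 d), f (bndk d) = g (bndk d) &
      ((forall x, iarrow d' (f x) (g x)) \/ (forall x, iarrow d' (g x) (f x)))].

Definition homotopic_rel (d d' : seq bool) (f g : ivert d -> ivert d') : Prop :=
  clos_refl_trans (ivert d -> ivert d') (@htop_step d d') f g.

(* Main.v *)
Require Import Defs.
From mathcomp Require Import all_boot.
From mathcomp Require Import zify.
From Stdlib Require Import Relations.Relation_Operators FunctionalExtensionality.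
Set Implicit Arguments. Unset Strict Implicit. Unset Printing Implicit Defensive.

Definition Fn (d d' : seq bool) (F : ivert d -> ivert d') (i : nat) : nat :=
  nat_of_ord (F (inord i)).

Lemma FnE d d' (F : ivert d -> ivert d') (x : ivert d) : Fn F x = F x.
Proof. by rewrite /Fn inord_val. Qed.

Lemma Fn_le d d' (F : ivert d -> ivert d') i : Fn F i <= size d'.
Proof. by rewrite /Fn -ltnS ltn_ord. Qed.

Definition eok (d d' : seq bool) i u v :=
  if nth false d i then iarrow d' u v else iarrow d' v u.

Lemma iarrow_refl d u : iarrow d u u.
Proof. by rewrite /iarrow eqxx. Qed.

Lemma eok_refl d d' i u : eok d d' i u u.
Proof. by rewrite /eok; case: ifP => _; apply: iarrow_refl. Qed.

Lemma iarrow_le d u v : iarrow d u v -> u <= v.+1 /\ v <= u.+1.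
Proof.
rewrite /iarrow => /or3P [/eqP->|/andP[/eqP-> _]|/andP[/eqP-> _]]; lia.
Qed.

Lemma idmap_eok d d' (F : ivert d -> ivert d') :
  idmap F -> forall i, i < size d -> eok d d' i (Fn F i) (Fn F i.+1).
Proof.
move=> HF i Hi; rewrite /eok /Fn.
have Hx : nat_of_ord (inord i : ivert d) = i by rewrite inordK //; lia.
have Hy : nat_of_ord (inord i.+1 : ivert d) = i.+1 by rewrite inordK //; lia.
case Hd: (nth false d i).
- apply: HF; rewrite /iarrow Hx Hy Hd; apply/or3P; apply: Or32; by rewrite eqxx.
- apply: HF; rewrite /iarrow Hx Hy Hd; apply/or3P; apply: Or33; by rewrite eqxx.
Qed.

Lemma eok_idmap d d' (F : ivert d -> ivert d') :
  (forall i, i < size d -> eok d d' i (Fn F i) (Fn F i.+1)) -> idmap F.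
Proof.
move=> H x y; rewrite /iarrow => /or3P [/eqP/ord_inj->|/andP[/eqP Ey Hd]|/andP[/eqP Ex Hd]].
- exact: iarrow_refl.
- have Hi : x < size d by have := ltn_ord y; lia.
  by have := H _ Hi; rewrite /eok Hd -Ey !FnE.
- have Hi : y < size d by have := ltn_ord x; lia.
  by have := H _ Hi; rewrite /eok (negbTE Hd) -Ex !FnE.
Qed.

Lemma sh_mono d d' (s : ivert d -> ivert d') : shrinking s ->
  forall i j, i <= j -> j <= size d -> Fn s i <= Fn s j.
Proof. move=> [_ _ Hm] i j Hij Hj; rewrite /Fn; apply: Hm; rewrite !inordK; lia. Qed.

Lemma sh_0 d d' (s : ivert d -> ivert d') : shrinking s -> Fn s 0 = 0.
Proof.
move=> Hs; case: (Hs) => _ Hsur _; case: (Hsur ord0) => x Hx.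
have Hxk : x <= size d by rewrite -ltnS ltn_ord.
have := sh_mono Hs (leq0n x) Hxk; rewrite FnE Hx /=; lia.
Qed.

Lemma sh_k d d' (s : ivert d -> ivert d') : shrinking s -> Fn s (size d) = size d'.
Proof.
move=> Hs; case: (Hs) => _ Hsur _; case: (Hsur ord_max) => x Hx.
have Hxk : x <= size d by rewrite -ltnS ltn_ord.
have := sh_mono Hs Hxk (leqnn _); rewrite FnE Hx /=.
have := Fn_le s (size d); lia.
Qed.

Lemma sh_step d d' (s : ivert d -> ivert d') : shrinking s ->
  forall i, i < size d -> Fn s i.+1 <= (Fn s i).+1.
Proof.
move=> [Hid _ _] i Hi; have := idmap_eok Hid Hi; rewrite /eok.
case: ifP => _ /iarrow_le; lia.
Qed.

Lemma step_sym d d' (f g : ivert d -> ivert d') : htop_step f g -> htop_step g f.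
Proof.
move=> [Hf Hg H0 Hk H]; constructor.
all: try assumption.
all: try (symmetry; assumption).
by case: H => H; [right|left].
Qed.

Lemma hom_sym d d' (f g : ivert d -> ivert d') : homotopic_rel f g -> homotopic_rel g f.
Proof.
elim=> [x y /step_sym H|x|x y z _ IH1 _ IH2].
- exact: rt_step.
- exact: rt_refl.
- eapply rt_trans; eauto.
Qed.

Lemma agree_all d d' (s s' : ivert d -> ivert d') :
  (forall i, i <= size d -> Fn s i = Fn s' i) -> homotopic_rel s s'.
Proof.
move=> H.
have -> : s = s'.
  apply: functional_extensionality => x; apply: ord_inj.
  rewrite -!FnE; apply: H; by rewrite -ltnS ltn_ord.
exact: rt_refl.
Qed.

Lemma core d d' n (s s' : ivert d -> ivert d') :
  shrinking s -> shrinking s' ->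
  (forall i, i < n -> Fn s i = Fn s' i) ->
  n <= size d ->
  Fn s' n < Fn s n ->
  (forall u v : ivert d -> ivert d', shrinking u -> shrinking v ->
     (forall i, i < n.+1 -> Fn u i = Fn v i) -> homotopic_rel u v) ->
  homotopic_rel s s'.
Proof.
move=> Hs Hs' Hag Hn Hlt IH.
have n0 : 0 < n.
  case: (posnP n) => [E|//]; move: Hlt; by rewrite E (sh_0 Hs) (sh_0 Hs').
set j := Fn s' n.
have Hp : Fn s n.-1 = Fn s' n.-1 by apply: Hag; lia.
have Ej1 : Fn s' n.-1 <= j by apply: (sh_mono Hs'); lia.
have Ej2 : Fn s n <= (Fn s n.-1).+1.
  have := sh_step Hs (i := n.-1); rewrite prednK //; apply; lia.
have Hsn : Fn s n = j.+1 by lia.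
have Hsp : Fn s' n.-1 = j by lia.
have HsK := sh_k Hs; have Hs'K := sh_k Hs'.
have Hsnk : Fn s n <= Fn s (size d) by apply: (sh_mono Hs).
have Hle := Fn_le s n.
have Hex : exists t, (n < t) && (j < Fn s' t).
  exists (size d); apply/andP; split.
  - case: (ltngtP n (size d)) => // E; first lia.
    move: Hlt; rewrite E Hs'K; lia.
  - lia.
case: (ex_minnP Hex) => t /andP[Hnt Hjt] Hmin.
have Htk : t <= size d.
  apply: Hmin; apply/andP; split; last lia.
  case: (ltngtP n (size d)) => // E; first lia.
  move: Hlt; rewrite E Hs'K; lia.
have Hreg : forall i, n <= i -> i < t -> Fn s' i = j.
  move=> i H1 H2.
  have Hge : j <= Fn s' i by apply: (sh_mono Hs'); lia.
  case: (ltngtP n i) => E; last by rewrite -E.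
  - case: (leqP (Fn s' i) j) => H3; first lia.
    have : t <= i by apply: Hmin; apply/andP; split.
    lia.
  - lia.
have Ht : Fn s' t = j.+1.
  have := sh_step Hs' (i := t.-1); rewrite prednK; last lia.
  have := Hreg t.-1; lia.
pose g i := if (n <= i) && (i < t) then j.+1 else Fn s' i.
have gcase : forall i, (n <= i /\ i < t /\ g i = j.+1) \/
                       ((i < n \/ t <= i) /\ g i = Fn s' i).
  move=> i; rewrite /g; case: (leqP n i) => H1; case: (ltnP i t) => H2 /=;
    [left|right|right|right]; do ?split; auto.
have Hg_le : forall i, g i <= size d'.
  move=> i; case: (gcase i) => [[_ [_ ->]]|[_ ->]]; last exact: Fn_le.
  lia.
pose s2 : ivert d -> ivert d' := fun x => inord (g x).
have Fs2 : forall i, i <= size d -> Fn s2 i = g i.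
  move=> i Hi; rewrite /Fn /s2 inordK; last by rewrite ltnS Hg_le.
  by rewrite inordK // ltnS.
have Hid2 : idmap s2.
  apply: eok_idmap => i Hi; rewrite !Fs2; try lia.
  case: (Hs') => Hid' _ _; case: (Hs) => Hid _ _.
  case: (gcase i) => [[H1 [H2 ->]]|[H1 ->]];
    case: (gcase i.+1) => [[H3 [H4 ->]]|[H3 ->]].
  - exact: eok_refl.
  - have E : i.+1 = t by lia.
    rewrite E Ht; exact: eok_refl.
  - have E : i.+1 = n by lia.
    rewrite -Hag; last lia. rewrite -Hsn -E.
    have := idmap_eok Hid Hi; apply.
  - by have := idmap_eok Hid' Hi.
have Hsh2 : shrinking s2.
  split; first exact: Hid2.
  - move=> y; case: (Hs') => _ Hsur _; case: (Hsur y) => x Hx.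
    have Hxk : x <= size d by rewrite -ltnS ltn_ord.
    case: (gcase x) => [[H1 [H2 _]]|[H1 H2]].
    + exists (inord n.-1); apply: ord_inj.
      rewrite -FnE Fs2; last by rewrite inordK; lia.
      rewrite inordK; last lia.
      case: (gcase n.-1) => [[? _]|[_ ->]]; first lia.
      rewrite Hsp -Hx -FnE Hreg //.
    + exists x; apply: ord_inj; by rewrite -FnE Fs2 // H2 FnE Hx.
  - move=> x y Hxy.
    have Hxk : x <= size d by rewrite -ltnS ltn_ord.
    have Hyk : y <= size d by rewrite -ltnS ltn_ord.
    rewrite -!FnE !Fs2 //.
    have M := sh_mono Hs' Hxy Hyk.
    have Mx : x < n -> Fn s' x <= j.
      move=> H; rewrite -Hsp; apply: (sh_mono Hs'); lia.
    have My : t <= y -> j.+1 <= Fn s' y.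
      move=> H; rewrite -Ht; apply: (sh_mono Hs'); lia.
    case: (gcase x) => [[H1 [H2 ->]]|[H1 ->]];
      case: (gcase y) => [[H3 [H4 ->]]|[H3 ->]]; lia.
have Hag2 : forall i, i < n.+1 -> Fn s i = Fn s2 i.
  move=> i Hi; rewrite Fs2; last lia.
  case: (gcase i) => [[H1 [H2 ->]]|[H1 ->]].
  - have -> : i = n by lia. exact: Hsn.
  - apply: Hag; lia.
have Hst : htop_step s' s2.
  case: (Hs') => Hid' _ _.
  constructor => //.
  - apply: ord_inj; rewrite -(FnE s') -(FnE s2) /= Fs2 //.
    case: (gcase 0) => [[? _]|[_ ->]] //; lia.
  - apply: ord_inj; rewrite -(FnE s') -(FnE s2) /= Fs2 //.
    case: (gcase (size d)) => [[? [? _]]|[_ ->]] //; lia.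
  - case Hdj: (nth false d' j); [left|right] => x;
      have Hxk : x <= size d by rewrite -ltnS ltn_ord.
    + rewrite -(FnE s') -(FnE s2) Fs2 //.
      case: (gcase x) => [[H1 [H2 ->]]|[H1 ->]]; last exact: iarrow_refl.
      rewrite Hreg //; apply/or3P; apply: Or32; by rewrite eqxx Hdj.
    + rewrite -(FnE s') -(FnE s2) Fs2 //.
      case: (gcase x) => [[H1 [H2 ->]]|[H1 ->]]; last exact: iarrow_refl.
      rewrite Hreg //; apply/or3P; apply: Or33; by rewrite eqxx Hdj.
eapply rt_trans; first exact: (IH s s2 Hs Hsh2 Hag2).
apply: hom_sym; exact: rt_step.
Qed.

Lemma main_ind d d' m : forall n (s s' : ivert d -> ivert d'),
  (size d).+1 - n <= m -> shrinking s -> shrinking s' ->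
  (forall i, i < n -> Fn s i = Fn s' i) -> homotopic_rel s s'.
Proof.
elim: m => [|m IH] n s s' Hm Hs Hs' Hag.
  apply: agree_all => i Hi; apply: Hag; lia.
case: (ltnP (size d) n) => Hn.
  apply: agree_all => i Hi; apply: Hag; lia.
have IH' : forall u v : ivert d -> ivert d', shrinking u -> shrinking v ->
     (forall i, i < n.+1 -> Fn u i = Fn v i) -> homotopic_rel u v.
  move=> u v Hu Hv H; apply: (IH n.+1) => //; lia.
case: (ltngtP (Fn s' n) (Fn s n)) => H.
- exact: core Hs Hs' Hag Hn H IH'.
- apply: hom_sym; apply: core Hs' Hs _ Hn H IH'.
  move=> i Hi; symmetry; exact: Hag.
- apply: IH' => // i Hi.
  case: (ltngtP i n) => E; [exact: Hag| lia | by rewrite E].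
Qed.

Theorem mainTheorem7 (d d' : seq bool) (s s' : ivert d -> ivert d') :
  shrinking s -> shrinking s' -> homotopic_rel s s'.
Proof.
move=> Hs Hs'; apply: (@main_ind d d' (size d).+1 0) => //.
Qed.
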